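(* Let $\vartheta$ be a primitive semi-compatible random substitution with topological entropy $s$. Then \[ s\;\leqslant\;\frac{1}{\lambda-1}\bm q_1^\intercal\bm R . \]
   Context: Let $\mathcal A=\{a_1,\dots,a_n\}$ be a finite alphabet, $\mathcal A^+$ the finite non-empty words over $\mathcal A$. A random substitution is a map $\vartheta$ from $\mathcal A$ to finite non-empty subsets of $\mathcal A^+$, extended to words by $\vartheta(u_1\cdots u_m)=\{w_1\cdots w_m: w_k\in\vartheta(u_k)\}$ and to sets of words by unions; powers $\vartheta^m$ are compositions. $|u|_a$ is the number of occurrences of letter $a$ in $u$; $\Phi(u)=(|u|_{a_1},\dots,|u|_{a_n})^\intercal$. $\vartheta$ is semi-compatible if for each $a$ all words in $\vartheta(a)$ have the same $\Phi$. Substitution matrix $M_{ij}=|u|_{a_i}$, $u\in\vartheta(a_j)$; primitive means $M$ primitive, with Perron–Frobenius eigenvalue $\lambda$ and right PF eigenvector $\bm R$ normalised by $\|\bm R\|_1=1$. $\bm q_1=(\log\#\vartheta(a_1),\dots,\log\#\vartheta(a_n))^\intercal$. The language $\mathcal L$ is the set of all subwords of words in $\vartheta^m(a)$, $a\in\mathcal A$, $m\in\mathbb N$; $\mathcal L_\ell$ its words of length $\ell$; the topological entropy is $s=\lim_{\ell\to\infty}\frac1\ell\log\#\mathcal L_\ell$ (the topological entropy of the associated subshift). *)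

(* Defs.v *)
From Stdlib Require Import Reals List Arith Lia.
Import ListNotations.
Open Scope R_scope.

(* Alphabet A = {0, ..., n-1}; words are lists of letters.
   A random substitution is  theta : nat -> list (list nat), where theta a
   lists (without repetition) the finitely many words of vartheta(a). *)

Definition letter_count (w : list nat) (i : nat) : nat := count_occ Nat.eq_dec w i.

Definition is_random_subst (n : nat) (theta : nat -> list (list nat)) : Prop :=
  forall a, (a < n)%nat ->
    theta a <> nil /\ NoDup (theta a) /\
    forall w, In w (theta a) -> w <> nil /\ forall b, In b w -> (b < n)%nat.

Inductive subst_word (theta : nat -> list (list nat)) : list nat -> list nat -> Prop :=
| sw_nil : subst_word theta nil nil
| sw_cons : forall a u v w, In v (theta a) -> subst_word theta u w ->
    subst_word theta (a :: u) (v ++ w).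

Inductive subst_pow (theta : nat -> list (list nat)) : nat -> list nat -> list nat -> Prop :=
| sp_zero : forall u, subst_pow theta 0 u u
| sp_succ : forall m u v w, subst_pow theta m u v -> subst_word theta v w ->
    subst_pow theta (S m) u w.

Definition semi_compatible (n : nat) (theta : nat -> list (list nat)) : Prop :=
  forall a, (a < n)%nat -> forall u v, In u (theta a) -> In v (theta a) ->
    forall i, letter_count u i = letter_count v i.

(* substitution matrix M_{ij} = |u|_{a_i}, u in theta(a_j)
   (well defined by semi-compatibility; we use the first listed word) *)
Definition subst_matrix (theta : nat -> list (list nat)) (i j : nat) : nat :=
  letter_count (hd nil (theta j)) i.

Definition nsum (n : nat) (f : nat -> nat) : nat := fold_right Nat.add 0%nat (map f (seq 0 n)).
Definition rsum (n : nat) (f : nat -> R) : R := fold_right Rplus 0 (map f (seq 0 n)).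

Definition mmul (n : nat) (A B : nat -> nat -> nat) (i j : nat) : nat :=
  nsum n (fun k => (A i k * B k j)%nat).

Fixpoint mpow (n : nat) (A : nat -> nat -> nat) (k : nat) : nat -> nat -> nat :=
  match k with
  | O => fun i j => if Nat.eqb i j then 1%nat else 0%nat
  | S k' => mmul n (mpow n A k') A
  end.

Definition primitive_matrix (n : nat) (A : nat -> nat -> nat) : Prop :=
  exists k, (1 <= k)%nat /\ forall i j, (i < n)%nat -> (j < n)%nat -> (0 < mpow n A k i j)%nat.

(* lambda is the Perron-Frobenius eigenvalue of A with right PF eigenvector Rv
   normalised by ||Rv||_1 = 1 (for a primitive matrix: the unique eigenvector
   with strictly positive entries, up to scaling) *)
Definition PF_right_eigen (n : nat) (A : nat -> nat -> nat) (lam : R) (Rv : nat -> R) : Prop :=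
  (forall i, (i < n)%nat -> 0 < Rv i) /\
  rsum n Rv = 1 /\
  forall i, (i < n)%nat -> rsum n (fun j => INR (A i j) * Rv j) = lam * Rv i.

Definition in_language (n : nat) (theta : nat -> list (list nat)) (w : list nat) : Prop :=
  exists a m u p q, (a < n)%nat /\ subst_pow theta m [a] u /\ u = p ++ w ++ q.

Definition has_card (P : list nat -> Prop) (k : nat) : Prop :=
  exists l : list (list nat), NoDup l /\ (forall w, In w l <-> P w) /\ length l = k.

(* Main.v *)
Require Import Defs.
From Stdlib Require Import Reals List Arith Lia Lra.
Import ListNotations.
Open Scope R_scope.

Lemma nsum_0 f : nsum 0 f = 0%nat. Proof. reflexivity. Qed.
Lemma nsum_S n f : nsum (S n) f = (nsum n f + f n)%nat.
Proof. unfold nsum. rewrite seq_S, map_app, fold_right_app. simpl.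
  generalize (map f (seq 0 n)). intro l. induction l; simpl; lia. Qed.
Lemma rsum_0 f : rsum 0 f = 0. Proof. reflexivity. Qed.
Lemma rsum_S n f : rsum (S n) f = rsum n f + f n.
Proof. unfold rsum. rewrite seq_S, map_app, fold_right_app. simpl.
  generalize (map f (seq 0 n)). intro l. induction l; simpl; lra. Qed.

Lemma rsum_ext n f g : (forall i, (i < n)%nat -> f i = g i) -> rsum n f = rsum n g.
Proof. induction n; intros H; [reflexivity|]. rewrite !rsum_S, IHn by (intros; apply H; lia).
  rewrite H by lia. reflexivity. Qed.
Lemma rsum_le n f g : (forall i, (i < n)%nat -> f i <= g i) -> rsum n f <= rsum n g.
Proof. induction n; intros H; [unfold rsum; simpl; lra|]. rewrite !rsum_S.
  assert (f n <= g n) by (apply H; lia). assert (rsum n f <= rsum n g) by (apply IHn; intros; apply H; lia). lra. Qed.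
Lemma rsum_plus n f g : rsum n (fun i => f i + g i) = rsum n f + rsum n g.
Proof. induction n; [unfold rsum; simpl; lra|]. rewrite !rsum_S, IHn. lra. Qed.
Lemma rsum_minus n f g : rsum n (fun i => f i - g i) = rsum n f - rsum n g.
Proof. induction n; [unfold rsum; simpl; lra|]. rewrite !rsum_S, IHn. lra. Qed.
Lemma rsum_scal n k f : rsum n (fun i => k * f i) = k * rsum n f.
Proof. induction n; [unfold rsum; simpl; lra|]. rewrite !rsum_S, IHn. lra. Qed.
Lemma rsum_scalr n k f : rsum n (fun i => f i * k) = rsum n f * k.
Proof. induction n; [unfold rsum; simpl; lra|]. rewrite !rsum_S, IHn. lra. Qed.
Lemma rsum_const n k : rsum n (fun _ => k) = INR n * k.
Proof. induction n; [unfold rsum; simpl; lra|]. rewrite !rsum_S, IHn, S_INR. lra. Qed.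
Lemma rsum_nonneg n f : (forall i, (i < n)%nat -> 0 <= f i) -> 0 <= rsum n f.
Proof. intros H. replace 0 with (rsum n (fun _ => 0)). apply rsum_le; auto.
  rewrite rsum_const; lra. Qed.
Lemma rsum_swap n m f : rsum n (fun i => rsum m (fun j => f i j)) = rsum m (fun j => rsum n (fun i => f i j)).
Proof. induction n.
  - rewrite rsum_0. transitivity (rsum m (fun _ => 0)). rewrite rsum_const; lra.
    apply rsum_ext; intros; rewrite rsum_0; reflexivity.
  - rewrite rsum_S, IHn, <- rsum_plus. apply rsum_ext. intros. rewrite rsum_S. reflexivity. Qed.
Lemma rsum_delta n a f : (a < n)%nat ->
  rsum n (fun i => (if Nat.eq_dec a i then 1 else 0) * f i) = f a.
Proof. induction n; intros H; [lia|]. rewrite rsum_S.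
  destruct (Nat.eq_dec a n).
  - subst. replace (rsum n (fun i => (if Nat.eq_dec n i then 1 else 0) * f i)) with 0. lra.
    transitivity (rsum n (fun _ => 0)). rewrite rsum_const; lra.
    apply rsum_ext. intros. destruct (Nat.eq_dec n i); [lia|lra].
  - rewrite IHn by lia. lra. Qed.
Lemma rsum_term_le n f i : (forall j, (j < n)%nat -> 0 <= f j) -> (i < n)%nat -> f i <= rsum n f.
Proof. induction n; intros H Hi; [lia|]. rewrite rsum_S.
  assert (0 <= rsum n f) by (apply rsum_nonneg; intros; apply H; lia).
  assert (0 <= f n) by (apply H; lia).
  destruct (Nat.eq_dec i n). subst; lra.
  assert (f i <= rsum n f) by (apply IHn; [intros; apply H; lia|lia]). lra. Qed.
Lemma INR_nsum n f : INR (nsum n f) = rsum n (fun i => INR (f i)).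
Proof. induction n; [reflexivity|]. rewrite nsum_S, rsum_S, plus_INR, IHn. reflexivity. Qed.
Lemma nsum_term_le n f i : (i < n)%nat -> (f i <= nsum n f)%nat.
Proof. induction n; intros Hi; [lia|]. rewrite nsum_S. destruct (Nat.eq_dec i n). subst; lia.
  specialize (IHn ltac:(lia)). lia. Qed.
Lemma nsum_ext n f g : (forall i, (i < n)%nat -> f i = g i) -> nsum n f = nsum n g.
Proof. induction n; intros H; [reflexivity|]. rewrite !nsum_S, IHn by (intros; apply H; lia).
  rewrite H by lia. reflexivity. Qed.
Lemma nsum_plus n f g : nsum n (fun i => f i + g i)%nat = (nsum n f + nsum n g)%nat.
Proof. induction n; [reflexivity|]. rewrite !nsum_S, IHn. lia. Qed.
Lemma nsum_delta n a f : (a < n)%nat ->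
  nsum n (fun i => f i * (if Nat.eq_dec a i then 1 else 0))%nat = f a.
Proof. induction n; intros H; [lia|]. rewrite nsum_S.
  destruct (Nat.eq_dec a n).
  - subst. replace (nsum n (fun i => f i * (if Nat.eq_dec n i then 1 else 0))%nat) with 0%nat. lia.
    transitivity (nsum n (fun _ => 0%nat)). clear. induction n; [reflexivity|rewrite nsum_S; lia].
    apply nsum_ext. intros. destruct (Nat.eq_dec n i); [lia|lia].
  - rewrite IHn by lia. lia. Qed.
Lemma nsum_delta1 n a : (a < n)%nat ->
  nsum n (fun i => if Nat.eq_dec a i then 1 else 0)%nat = 1%nat.
Proof. intros H. pose proof (nsum_delta n a (fun _ => 1%nat) H) as E. simpl in E. rewrite <- E.
  apply nsum_ext. intros i _. destruct (Nat.eq_dec a i); lia. Qed.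


Fixpoint SL (psi : nat -> list (list nat)) (v : list nat) : list (list nat) :=
  match v with
  | [] => [[]]
  | a :: u => flat_map (fun x => map (fun w => x ++ w) (SL psi u)) (psi a)
  end.

Fixpoint Xv (n : nat) (M : nat -> nat -> nat) (m b : nat) : nat -> nat :=
  match m with
  | O => fun a => if Nat.eq_dec b a then 1%nat else 0%nat
  | S m' => fun a => nsum n (fun j => (M a j * Xv n M m' b j)%nat)
  end.

Lemma SL_length psi a u : length (SL psi (a :: u)) = (length (psi a) * length (SL psi u))%nat.
Proof. simpl. induction (psi a); simpl; [reflexivity|]. rewrite length_app, length_map, IHl. lia. Qed.

Lemma lc_cons a v j : letter_count (a :: v) j = ((if Nat.eq_dec a j then 1 else 0) + letter_count v j)%nat.
Proof. unfold letter_count. destruct (Nat.eq_dec a j).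
  - rewrite count_occ_cons_eq by auto. lia.
  - rewrite count_occ_cons_neq by auto. lia. Qed.
Lemma lc_app u v j : letter_count (u ++ v) j = (letter_count u j + letter_count v j)%nat.
Proof. apply count_occ_app. Qed.
Lemma lc_nil j : letter_count [] j = 0%nat. Proof. reflexivity. Qed.

Definition letters_lt (n : nat) (w : list nat) := forall b, In b w -> (b < n)%nat.

Lemma length_lc n w : letters_lt n w -> length w = nsum n (letter_count w).
Proof. induction w as [|a w IH]; intros H.
  - simpl. clear. induction n; [reflexivity| rewrite nsum_S, <- IHn; reflexivity].
  - simpl. rewrite (nsum_ext n _ (fun j => ((if Nat.eq_dec a j then 1 else 0) + letter_count w j)%nat)) by (intros; apply lc_cons).
    rewrite nsum_plus, nsum_delta1, IH. lia. intros b Hb; apply H; simpl; auto. apply H; simpl; auto. Qed.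

Section Comb.
Variable n : nat.
Variable theta : nat -> list (list nat).
Hypothesis Hsub : is_random_subst n theta.
Hypothesis Hsc : semi_compatible n theta.
Let M := subst_matrix theta.

Lemma sw_in u w : subst_word theta u w -> In w (SL theta u).
Proof. induction 1; simpl; [auto|]. apply in_flat_map. exists v. split; auto. apply in_map; auto. Qed.

Lemma sw_app u1 u2 w : subst_word theta (u1 ++ u2) w ->
  exists w1 w2, w = w1 ++ w2 /\ subst_word theta u1 w1 /\ subst_word theta u2 w2.
Proof. revert w. induction u1 as [|a u1 IH]; intros w H.
  - exists [], w. simpl. repeat split; auto. constructor.
  - simpl in H. inversion H as [|a0 u0 v0 w0 Hin Hsw]; subst. destruct (IH _ Hsw) as (w1 & w2 & E & Hw1 & Hw2). subst.
    exists (v0 ++ w1), w2. rewrite app_assoc. repeat split; auto. constructor; auto. Qed.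

Fixpoint PLw (m : nat) (u : list nat) : list (list nat) :=
  match m with O => [u] | S m' => flat_map (SL theta) (PLw m' u) end.

Lemma sp_in m u x : subst_pow theta m u x -> In x (PLw m u).
Proof. induction 1; simpl; [auto|]. apply in_flat_map. exists v. split; auto. apply sw_in; auto. Qed.

Lemma SL_count v z : In z (SL theta v) -> letters_lt n v ->
  letters_lt n z /\ forall i, letter_count z i = nsum n (fun j => (M i j * letter_count v j)%nat).
Proof. revert z. induction v as [|a v IH]; intros z Hz Hv.
  - simpl in Hz. destruct Hz as [<-|[]]. split. intros b []. intros i. rewrite lc_nil.
    clear. induction n; [reflexivity|rewrite nsum_S, <- IHn0, lc_nil; lia].
  - simpl in Hz. apply in_flat_map in Hz. destruct Hz as (x & Hx & Hz). apply in_map_iff in Hz.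
    destruct Hz as (w & <- & Hw). assert (Ha : (a < n)%nat) by (apply Hv; simpl; auto).
    destruct (IH w Hw) as [Hw1 Hw2]. intros b Hb; apply Hv; simpl; auto.
    destruct (Hsub a Ha) as (Hne & _ & Hwd). split.
    + intros b Hb. apply in_app_or in Hb. destruct Hb; auto. apply (proj2 (Hwd x Hx)); auto.
    + intros i. rewrite lc_app, Hw2.
      rewrite (nsum_ext n (fun j => (M i j * letter_count (a :: v) j)%nat) (fun j => (M i j * (if Nat.eq_dec a j then 1 else 0) + M i j * letter_count v j)%nat))
        by (intros; rewrite lc_cons; lia).
      rewrite nsum_plus, nsum_delta by auto. f_equal. unfold M, subst_matrix.
      apply (Hsc a Ha x (hd [] (theta a))); auto. destruct (theta a); [congruence|simpl; auto]. Qed.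

Lemma PLw_count m b y : (b < n)%nat -> In y (PLw m [b]) ->
  letters_lt n y /\ forall i, letter_count y i = Xv n M m b i.
Proof. intros Hb. revert y. induction m; intros y Hy.
  - simpl in Hy. destruct Hy as [<-|[]]. split. intros c [<-|[]]; auto.
    intros i. rewrite lc_cons, lc_nil. simpl. destruct (Nat.eq_dec b i); lia.
  - simpl in Hy. apply in_flat_map in Hy. destruct Hy as (z & Hz & Hy).
    destruct (IHm z Hz) as [Hz1 Hz2]. destruct (SL_count z y Hy Hz1) as [Hy1 Hy2].
    split; auto. intros i. rewrite Hy2. simpl. apply nsum_ext. intros. rewrite Hz2. reflexivity. Qed.

Definition q1 (a : nat) : R := ln (INR (length (theta a))).

Lemma theta_len_pos a : (a < n)%nat -> (0 < length (theta a))%nat.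
Proof. intros Ha. destruct (Hsub a Ha) as (Hne & _). destruct (theta a); simpl; [congruence|lia]. Qed.

Lemma q1_nonneg a : (a < n)%nat -> 0 <= q1 a.
Proof. intros Ha. unfold q1. rewrite <- ln_1. pose proof (theta_len_pos a Ha).
  destruct (Rle_lt_or_eq_dec 1 (INR (length (theta a)))).
  apply le_INR in H. simpl in H; exact H.
  apply Rlt_le, ln_increasing; lra. rewrite e; lra. Qed.

Lemma SL_len v : letters_lt n v ->
  INR (length (SL theta v)) = exp (rsum n (fun a => INR (letter_count v a) * q1 a)).
Proof. induction v as [|a v IH]; intros Hv.
  - simpl. transitivity (exp 0). rewrite exp_0; reflexivity. f_equal.
    transitivity (rsum n (fun _ => 0)). rewrite rsum_const; lra. apply rsum_ext; intros; unfold letter_count; simpl; lra.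
  - assert (Ha : (a < n)%nat) by (apply Hv; simpl; auto).
    rewrite SL_length, mult_INR, IH by (intros b Hb; apply Hv; simpl; auto).
    rewrite (rsum_ext n (fun j => INR (letter_count (a :: v) j) * q1 j) (fun j => (if Nat.eq_dec a j then 1 else 0) * q1 j + INR (letter_count v j) * q1 j)).
    rewrite rsum_plus, rsum_delta by auto. rewrite exp_plus. replace (exp (q1 a)) with (INR (length (theta a))). reflexivity.
    unfold q1. rewrite exp_ln. reflexivity. apply lt_0_INR, theta_len_pos; auto.
    intros j _. rewrite lc_cons, plus_INR. destruct (Nat.eq_dec a j); simpl; lra. Qed.

Definition sig (b j : nat) : R := rsum n (fun a => INR (Xv n M j b a) * q1 a).
Fixpoint Ncum (b m : nat) : R := match m with O => 0 | S m' => Ncum b m' + sig b m' end.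

Lemma PLw_len m b : (b < n)%nat -> INR (length (PLw m [b])) = exp (Ncum b m).
Proof. intros Hb. induction m.
  - simpl. rewrite exp_0. reflexivity.
  - simpl PLw. simpl Ncum. rewrite exp_plus, <- IHm.
    assert (H : forall L, (forall y, In y L -> In y (PLw m [b])) ->
      INR (length (flat_map (SL theta) L)) = INR (length L) * exp (sig b m)).
    { induction L as [|y L IHL]; intros HL. simpl; lra.
      simpl flat_map. rewrite length_app, plus_INR, IHL by (intros; apply HL; simpl; auto).
      destruct (PLw_count m b y Hb) as [Hy1 Hy2]. apply HL; simpl; auto.
      rewrite SL_len by auto. unfold sig. simpl length. rewrite S_INR.
      rewrite (rsum_ext n (fun a => INR (letter_count y a) * q1 a) (fun a => INR (Xv n M m b a) * q1 a)) by (intros; rewrite Hy2; reflexivity).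
      lra. }
    apply H; auto. Qed.

End Comb.


Lemma exp_le' x y : x <= y -> exp x <= exp y.
Proof. intros H. destruct (Rle_lt_or_eq_dec x y H). left; apply exp_increasing; auto. subst; lra. Qed.

Definition cc (bs : list (nat * list nat)) : list nat := concat (map snd bs).

Lemma cc_cons q bs : cc (q :: bs) = snd q ++ cc bs. Proof. reflexivity. Qed.
Lemma cc_app b1 b2 : cc (b1 ++ b2) = cc b1 ++ cc b2.
Proof. unfold cc. rewrite map_app, concat_app. reflexivity. Qed.

Lemma front L : forall bs p r, cc bs = p ++ r -> (forall q, In q bs -> (length (snd q) <= L)%nat) ->
  exists pre bs2 p', bs = pre ++ bs2 /\ cc bs2 = p' ++ r /\ (length p' <= L)%nat.
Proof. induction bs as [|q bs IH]; intros p r H HL.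
  - exists [], [], p. destruct p; simpl in *; [repeat split; auto; lia|discriminate].
  - destruct (Nat.le_gt_cases (length p) L) as [Hp|Hp].
    + exists [], (q :: bs), p. repeat split; auto.
    + rewrite cc_cons in H. apply app_eq_app in H. destruct H as (l & [[E1 E2]|[E1 E2]]).
      * assert (length (snd q) <= L)%nat by (apply HL; simpl; auto).
        rewrite E1, length_app in H. lia.
      * destruct (IH l r E2) as (pre & bs2 & p' & F1 & F2 & F3). intros; apply HL; simpl; auto.
        exists (q :: pre), bs2, p'. subst. repeat split; auto. Qed.

Lemma back L : forall bs r q, cc bs = r ++ q -> (forall x, In x bs -> (length (snd x) <= L)%nat) ->
  exists bs1 post q', bs = bs1 ++ post /\ cc bs1 = r ++ q' /\ (length q' <= L)%nat.
Proof. induction bs as [|z bs IH] using rev_ind; intros r q H HL.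
  - exists [], [], q. destruct r, q; simpl in *; try discriminate. repeat split; auto; lia.
  - destruct (Nat.le_gt_cases (length q) L) as [Hq|Hq].
    + exists (bs ++ [z]), [], q. repeat split; auto. rewrite app_nil_r; auto.
    + rewrite cc_app in H. unfold cc at 2 in H. simpl in H. rewrite app_nil_r in H.
      apply app_eq_app in H. destruct H as (l & [[E1 E2]|[E1 E2]]).
      * destruct (IH r l E1) as (bs1 & post & q' & F1 & F2 & F3). intros; apply HL; apply in_or_app; auto.
        exists bs1, (post ++ [z]), q'. subst. repeat split; auto. rewrite app_assoc; auto.
      * assert (length (snd z) <= L)%nat by (apply HL; apply in_or_app; simpl; auto).
        rewrite E2, length_app in H. lia. Qed.

Fixpoint allw (n j : nat) : list (list nat) :=
  match j with O => [[]] | S j' => flat_map (fun a => map (cons a) (allw n j')) (seq 0 n) end.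

Lemma allw_in n v : letters_lt n v -> In v (allw n (length v)).
Proof. induction v as [|a v IH]; intros H; simpl; [auto|].
  apply in_flat_map. exists a. split. apply in_seq. assert (a < n)%nat by (apply H; simpl; auto). lia.
  apply in_map. apply IH. intros b Hb; apply H; simpl; auto. Qed.

Lemma allw_len n j : length (allw n j) = (n ^ j)%nat.
Proof. induction j; simpl; [reflexivity|]. rewrite (flat_map_constant_length (c := (n^j)%nat)).
  rewrite length_seq. reflexivity. intros. rewrite length_map; auto. Qed.

Definition Vs (n k : nat) := flat_map (allw n) (seq 0 (S k)).

Lemma Vs_len n k : (length (Vs n k) <= (S n) ^ k)%nat.
Proof. induction k.
  - unfold Vs. simpl. lia.
  - unfold Vs in *. rewrite seq_S, flat_map_app, length_app.
    assert (E: flat_map (allw n) [(0 + S k)%nat] = allw n (S k)) by (simpl flat_map; apply app_nil_r).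
    rewrite E, allw_len.
    assert (n ^ k <= S n ^ k)%nat by (apply Nat.pow_le_mono_l; lia).
    rewrite (Nat.pow_succ_r' n k), (Nat.pow_succ_r' (S n) k). nia. Qed.

Lemma Vs_in n k v : letters_lt n v -> (length v <= k)%nat -> In v (Vs n k).
Proof. intros H1 H2. unfold Vs. apply in_flat_map. exists (length v). split.
  apply in_seq; lia. apply allw_in; auto. Qed.

Lemma flat_map_len_R {A B} (g : A -> list B) (l : list A) (K : R) :
  (forall x, In x l -> INR (length (g x)) <= K) -> INR (length (flat_map g l)) <= INR (length l) * K.
Proof. induction l as [|x l IH]; intros H; [simpl; lra|].
  cbn [flat_map length]. rewrite length_app, plus_INR, S_INR.
  assert (INR (length (g x)) <= K) by (apply H; simpl; auto).
  assert (INR (length (flat_map g l)) <= INR (length l) * K) by (apply IH; intros; apply H; simpl; auto). lra. Qed.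

Section Comb2.
Variable n : nat.
Variable theta : nat -> list (list nat).
Hypothesis Hsub : is_random_subst n theta.
Hypothesis Hsc : semi_compatible n theta.
Let M := subst_matrix theta.

Lemma sp_split r m u x : subst_pow theta (r + m) u x -> exists y, subst_pow theta r u y /\ subst_pow theta m y x.
Proof. revert x. induction m; intros x H.
  - rewrite Nat.add_0_r in H. exists x. split; auto. constructor.
  - rewrite Nat.add_succ_r in H. inversion H as [|m0 u0 v0 w0 H1 H2]; subst.
    destruct (IHm v0 H1) as (y & Hy1 & Hy2). exists y. split; auto. econstructor; eauto. Qed.

Lemma sw_letters u w : subst_word theta u w -> letters_lt n u -> letters_lt n w.
Proof. intros H Hu. apply sw_in in H. destruct (SL_count n theta Hsub Hsc u w H Hu); auto. Qed.

Lemma sp_letters m u x : subst_pow theta m u x -> letters_lt n u -> letters_lt n x.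
Proof. induction 1; auto. intros Hu. eapply sw_letters; eauto. Qed.

Lemma blocks_step m : forall bs w, subst_word theta (cc bs) w ->
  (forall p, In p bs -> subst_pow theta m [fst p] (snd p)) ->
  exists bs', map fst bs' = map fst bs /\ cc bs' = w /\ forall p, In p bs' -> subst_pow theta (S m) [fst p] (snd p).
Proof. induction bs as [|q bs IH]; intros w H Hb.
  - inversion H; subst. exists []. repeat split; auto. intros p [].
  - rewrite cc_cons in H. apply sw_app in H. destruct H as (w1 & w2 & -> & H1 & H2).
    destruct (IH w2 H2) as (bs' & E1 & E2 & E3). intros; apply Hb; simpl; auto.
    exists ((fst q, w1) :: bs'). simpl. rewrite E1. repeat split; auto. rewrite cc_cons, E2; auto.
    intros p [<-|Hp]; auto. simpl. econstructor. apply Hb; simpl; auto. auto. Qed.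

Lemma blocks m y x : subst_pow theta m y x -> exists bs, map fst bs = y /\ cc bs = x /\
  forall p, In p bs -> subst_pow theta m [fst p] (snd p).
Proof. induction 1.
  - exists (map (fun b => (b, [b])) u). split. rewrite map_map; simpl; apply map_id.
    split. induction u; simpl; auto. unfold cc in *; simpl. rewrite IHu; auto.
    intros p Hp. apply in_map_iff in Hp. destruct Hp as (b & <- & _). constructor.
  - destruct IHsubst_pow as (bs & E1 & E2 & E3). subst.
    destruct (blocks_step m bs w H0 E3) as (bs' & F1 & F2 & F3). exists bs'. auto. Qed.

Definition Dn (b j : nat) : nat := nsum n (Xv n M j b).

Lemma sp_len m b x : (b < n)%nat -> subst_pow theta m [b] x -> length x = Dn b m.
Proof. intros Hb H. apply sp_in in H. destruct (PLw_count n theta Hsub Hsc m b x Hb H) as [H1 H2].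
  rewrite (length_lc n x H1). unfold Dn. apply nsum_ext. intros; auto. Qed.

Definition psi (m b : nat) := PLw theta m [b].

Lemma SL_blocks m : forall bs, (forall p, In p bs -> subst_pow theta m [fst p] (snd p)) ->
  In (cc bs) (SL (psi m) (map fst bs)).
Proof. induction bs as [|q bs IH]; intros H; simpl; [auto|].
  rewrite cc_cons. apply in_flat_map. exists (snd q). split. apply sp_in. apply H; simpl; auto.
  apply (in_map (fun w => snd q ++ w)). apply IH. intros; apply H; simpl; auto. Qed.

Definition tot (m : nat) (v : list nat) : nat := fold_right (fun b acc => (Dn b m + acc)%nat) 0%nat v.

Lemma tot_blocks m : forall bs, (forall p, In p bs -> length (snd p) = Dn (fst p) m) ->
  tot m (map fst bs) = length (cc bs).
Proof. induction bs as [|q bs IH]; intros H; [reflexivity|]. simpl. rewrite cc_cons, length_app, IH, H; simpl; auto.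
  intros; apply H; simpl; auto. Qed.

Lemma len_blocks A : forall bs, (forall p, In p bs -> (A <= length (snd p))%nat) ->
  (A * length bs <= length (cc bs))%nat.
Proof. induction bs as [|q bs IH]; intros H; simpl; [lia|]. rewrite cc_cons, length_app.
  assert (A <= length (snd q))%nat by (apply H; simpl; auto).
  assert (A * length bs <= length (cc bs))%nat by (apply IH; intros; apply H; simpl; auto). nia. Qed.

Lemma SL_psi_len m K v : letters_lt n v -> 0 <= K -> (forall b, (b < n)%nat -> Ncum n theta b m <= K * INR (Dn b m)) ->
  INR (length (SL (psi m) v)) <= exp (K * INR (tot m v)).
Proof. intros Hv HK HN. induction v as [|a v IH].
  - simpl. rewrite Rmult_0_r, exp_0. lra.
  - assert (Ha : (a < n)%nat) by (apply Hv; simpl; auto).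
    change (tot m (a :: v)) with (Dn a m + tot m v)%nat.
    rewrite (SL_length (psi m) a v), mult_INR, plus_INR, Rmult_plus_distr_l, exp_plus.
    apply Rmult_le_compat. apply pos_INR. apply pos_INR.
    unfold psi. rewrite (PLw_len n theta Hsub Hsc) by auto. apply exp_le'. apply HN; auto.
    apply IH. intros b Hb; apply Hv; simpl; auto. Qed.

Lemma legal_long a m' x : (a < n)%nat -> subst_pow theta m' [a] x -> exists L, (length x <= L)%nat /\ L = Dn a m'.
Proof. intros. exists (Dn a m'). rewrite (sp_len m' a x); auto. Qed.

Lemma count_main m A L K :
  (1 <= A)%nat ->
  (forall b j, (b < n)%nat -> (j <= m)%nat -> (Dn b j <= L)%nat) ->
  (forall b, (b < n)%nat -> (A <= Dn b m)%nat) ->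
  0 <= K ->
  (forall b, (b < n)%nat -> Ncum n theta b m <= K * INR (Dn b m)) ->
  forall l c0, (L < l)%nat -> has_card (fun w => length w = l /\ in_language n theta w) c0 ->
  INR c0 <= INR (S L) * INR ((S n) ^ ((l + 2 * L) / A)) * exp (K * INR (l + 2 * L)).
Proof.
  intros HA HL HAm HK HN l c0 Hl (lw & Hnd & Hin & Hlen).
  set (kmax := ((l + 2 * L) / A)%nat).
  set (Cand := flat_map (fun v => flat_map (fun z => map (fun i => firstn l (skipn i z)) (seq 0 (S L))) (SL (psi m) v))
     (filter (fun v => Nat.leb (tot m v) (l + 2 * L)) (Vs n kmax))).
  assert (Hincl : incl lw Cand).
  { intros u Hu. apply Hin in Hu. destruct Hu as (Hul & a & m' & x & p & q & Ha & Hsp & Hx).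
    assert (Hm' : (m < m')%nat).
    { destruct (Nat.le_gt_cases m' m); auto. exfalso.
      pose proof (sp_len m' a x Ha Hsp). pose proof (HL a m' Ha H).
      assert (length x >= l)%nat by (rewrite Hx, !length_app; lia). lia. }
    replace m' with ((m' - m) + m)%nat in Hsp by lia.
    destruct (sp_split _ _ _ _ Hsp) as (y & Hy1 & Hy2).
    assert (Hly : letters_lt n y). { eapply sp_letters; eauto. intros b [<-|[]]; auto. }
    destruct (blocks _ _ _ Hy2) as (bs & Eb1 & Eb2 & Eb3).
    assert (Hbn : forall q0, In q0 bs -> (fst q0 < n)%nat).
    { intros q0 Hq. apply Hly. rewrite <- Eb1. apply in_map; auto. }
    assert (Hblen : forall q0, In q0 bs -> length (snd q0) = Dn (fst q0) m).
    { intros q0 Hq. apply sp_len; auto. }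
    assert (HbL : forall q0, In q0 bs -> (length (snd q0) <= L)%nat).
    { intros q0 Hq. rewrite Hblen; auto. }
    rewrite Hx in Eb2.
    destruct (front L bs p (u ++ q) Eb2 HbL) as (pre & bs2 & p' & F1 & F2 & F3).
    rewrite app_assoc in F2.
    assert (HbL2 : forall q0, In q0 bs2 -> (length (snd q0) <= L)%nat).
    { intros; apply HbL; rewrite F1; apply in_or_app; auto. }
    destruct (back L bs2 (p' ++ u) q F2 HbL2) as (bs1 & post & q' & G1 & G2 & G3).
    assert (Hin1 : forall q0, In q0 bs1 -> In q0 bs).
    { intros. rewrite F1, G1. apply in_or_app; right; apply in_or_app; auto. }
    set (v := map fst bs1). set (z := cc bs1).
    assert (Hz : In z (SL (psi m) v)). { apply SL_blocks. intros; apply Eb3; auto. }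
    assert (Htot : tot m v = length z). { apply tot_blocks. intros; apply Hblen; auto. }
    assert (Hzl : length z = (length p' + l + length q')%nat). { unfold z. rewrite G2, !length_app. lia. }
    assert (Hvl : letters_lt n v). { intros b Hb. unfold v in Hb. apply in_map_iff in Hb.
      destruct Hb as (q0 & <- & Hq0). apply Hbn; auto. }
    assert (HAv : (A * length v <= length z)%nat).
    { unfold v. rewrite length_map. apply len_blocks. intros. rewrite Hblen by auto. apply HAm; auto. }
    unfold Cand. apply in_flat_map. exists v. split.
    - apply filter_In. split.
      + apply Vs_in; auto. unfold kmax. apply Nat.div_le_lower_bound; lia.
      + apply Nat.leb_le. lia.
    - apply in_flat_map. exists z. split; auto. apply in_map_iff. exists (length p'). split.
      + unfold z. rewrite G2, <- app_assoc, <- Hul. clear. induction p'; simpl; auto.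
        rewrite <- (Nat.add_0_r (length u)) at 1. rewrite firstn_app_2. simpl. apply app_nil_r.
      + apply in_seq. lia. }
  pose proof (NoDup_incl_length Hnd Hincl) as Hle. rewrite Hlen in Hle.
  apply le_INR in Hle. eapply Rle_trans; [exact Hle|]. unfold Cand.
  eapply Rle_trans. apply (flat_map_len_R _ _ (INR (S L) * exp (K * INR (l + 2 * L)))).
  - intros v Hv. apply filter_In in Hv. destruct Hv as [Hv1 Hv2]. apply Nat.leb_le in Hv2.
    rewrite (flat_map_constant_length (c := S L)) by (intros; rewrite length_map, length_seq; auto).
    rewrite mult_INR, Rmult_comm. apply Rmult_le_compat_l. apply pos_INR.
    assert (Hvl : letters_lt n v).
    { unfold Vs in Hv1. apply in_flat_map in Hv1. destruct Hv1 as (j & _ & Hj).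
      clear -Hj. revert v Hj. induction j; simpl; intros v Hj.
      destruct Hj as [<-|[]]. intros b [].
      apply in_flat_map in Hj. destruct Hj as (a & Ha & Hv). apply in_map_iff in Hv. destruct Hv as (w & <- & Hw).
      intros b [<-|Hb]. apply in_seq in Ha; lia. apply (IHj w Hw); auto. }
    apply (Rle_trans _ (exp (K * INR (tot m v)))). apply SL_psi_len; auto.
    apply exp_le'. apply Rmult_le_compat_l. exact HK. apply le_INR; exact Hv2.
  - match goal with |- INR (length ?F) * _ <= _ => 
      assert (Ha : INR (length F) <= INR (S n ^ kmax)) by (apply le_INR; eapply Nat.le_trans; [apply filter_length_le|apply Vs_len]) end.
    assert (0 <= INR (S L) * exp (K * INR (l + 2 * L))) by (apply Rmult_le_pos; [apply pos_INR|left; apply exp_pos]).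
    replace (INR (S L) * INR (S n ^ kmax) * exp (K * INR (l + 2 * L))) with (INR (S n ^ kmax) * (INR (S L) * exp (K * INR (l + 2 * L)))) by ring.
    apply Rmult_le_compat_r; auto.
Qed.

Lemma count_zero L : (forall b j, (b < n)%nat -> (Dn b j <= L)%nat) ->
  forall l c0, (L < l)%nat -> has_card (fun w => length w = l /\ in_language n theta w) c0 -> c0 = 0%nat.
Proof. intros HL l c0 Hl (lw & Hnd & Hin & Hlen). subst c0. destruct lw as [|u lw]; auto.
  exfalso. destruct (proj1 (Hin u) (or_introl eq_refl)) as (Hul & a & m' & x & p & q & Ha & Hsp & Hx).
  pose proof (sp_len m' a x Ha Hsp). pose proof (HL a m' Ha).
  assert (length x >= l)%nat by (rewrite Hx, !length_app; lia). lia. Qed.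

End Comb2.


Lemma Rdiv_le_0_compat a b : 0 <= a -> 0 < b -> 0 <= a / b.
Proof. intros. unfold Rdiv. apply Rmult_le_pos; auto. left; apply Rinv_0_lt_compat; auto. Qed.

Lemma min_pos n f : (forall c, (c < n)%nat -> 0 < f c) -> exists d, 0 < d /\ forall c, (c < n)%nat -> d <= f c.
Proof. induction n; intros H. exists 1. split; [lra|intros; lia].
  destruct IHn as (d & Hd & Hd2). intros; apply H; lia.
  exists (Rmin d (f n)). split. apply Rmin_pos; auto; apply H; lia.
  intros c Hc. destruct (Nat.eq_dec c n). subst; apply Rmin_r.
  eapply Rle_trans. apply Rmin_l. apply Hd2; lia. Qed.

Lemma INR_mpow0 n M a c : INR (mpow n M 0 a c) = if Nat.eq_dec a c then 1 else 0.
Proof. simpl. destruct (Nat.eq_dec a c). subst; rewrite Nat.eqb_refl; reflexivity.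
  apply Nat.eqb_neq in n0. rewrite n0. reflexivity. Qed.

Lemma INR_mpowS n M k a d : INR (mpow n M (S k) a d) = rsum n (fun c => INR (mpow n M k a c) * INR (M c d)).
Proof. simpl mpow. unfold mmul. rewrite INR_nsum. apply rsum_ext. intros. apply mult_INR. Qed.

Section Ana.
Variable n : nat.
Variable M : nat -> nat -> nat.
Variable lam : R.
Variable Rv : nat -> R.
Variable q : nat -> R.
Hypothesis Hn : (1 <= n)%nat.
Hypothesis HPF : PF_right_eigen n M lam Rv.
Hypothesis Hlam : 1 <= lam.
Hypothesis Hq : forall a, (a < n)%nat -> 0 <= q a.
Variable p : nat.
Hypothesis Hp : (1 <= p)%nat.
Hypothesis Hpos : forall i j, (i < n)%nat -> (j < n)%nat -> (0 < mpow n M p i j)%nat.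

Lemma Rpos a : (a < n)%nat -> 0 < Rv a. Proof. destruct HPF as (H & _); auto. Qed.
Lemma Rle1 a : (a < n)%nat -> Rv a <= 1.
Proof. destruct HPF as (H1 & H2 & _). intros Ha. rewrite <- H2. apply rsum_term_le; auto.
  intros; left; auto. Qed.

Lemma E2 k a : (a < n)%nat -> rsum n (fun c => INR (mpow n M k a c) * Rv c) = lam ^ k * Rv a.
Proof. revert a. induction k; intros a Ha.
  - rewrite (rsum_ext n _ (fun c => (if Nat.eq_dec a c then 1 else 0) * Rv c)) by (intros; rewrite INR_mpow0; auto).
    rewrite rsum_delta; auto. simpl; lra.
  - rewrite (rsum_ext n _ (fun d => rsum n (fun c => INR (mpow n M k a c) * INR (M c d) * Rv d)))
      by (intros; rewrite INR_mpowS, rsum_scalr; reflexivity).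
    rewrite rsum_swap.
    rewrite (rsum_ext n _ (fun c => INR (mpow n M k a c) * (lam * Rv c))).
    rewrite (rsum_ext n _ (fun c => lam * (INR (mpow n M k a c) * Rv c))) by (intros; ring).
    rewrite rsum_scal, IHk by auto. simpl; ring.
    intros c Hc. destruct HPF as (_ & _ & H3). rewrite <- H3 by auto. rewrite <- rsum_scal.
    apply rsum_ext. intros; ring. Qed.

Variable b : nat.
Hypothesis Hb : (b < n)%nat.

Lemma E1 k : forall j a, (a < n)%nat ->
  INR (Xv n M (j + k) b a) = rsum n (fun c => INR (mpow n M k a c) * INR (Xv n M j b c)).
Proof. induction k; intros j a Ha.
  - rewrite Nat.add_0_r. rewrite (rsum_ext n _ (fun c => (if Nat.eq_dec a c then 1 else 0) * INR (Xv n M j b c)))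
      by (intros; rewrite INR_mpow0; auto). rewrite rsum_delta; auto.
  - replace (j + S k)%nat with (S j + k)%nat by lia. rewrite IHk by auto.
    rewrite (rsum_ext n (fun d => INR (mpow n M (S k) a d) * INR (Xv n M j b d))
       (fun d => rsum n (fun c => INR (mpow n M k a c) * INR (M c d) * INR (Xv n M j b d))))
      by (intros; rewrite INR_mpowS, rsum_scalr; reflexivity).
    rewrite rsum_swap. apply rsum_ext. intros c Hc. simpl Xv. rewrite INR_nsum, <- rsum_scal.
    apply rsum_ext. intros. rewrite mult_INR. ring. Qed.

Definition f (j a : nat) : R := INR (Xv n M j b a) / (lam ^ j * Rv a).
Definition w (k a c : nat) : R := INR (mpow n M k a c) * Rv c / (lam ^ k * Rv a).

Lemma lam_pos : 0 < lam. Proof. lra. Qed.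

Lemma E3 j k a : (a < n)%nat -> f (j + k) a = rsum n (fun c => w k a c * f j c).
Proof. intros Ha. unfold f. rewrite E1 by auto.
  assert (Hl : forall i, 0 < lam ^ i) by (intros; apply pow_lt; lra).
  pose proof (Rpos a Ha).
  rewrite (rsum_ext n (fun c => w k a c * (INR (Xv n M j b c) / (lam ^ j * Rv c)))
     (fun c => INR (mpow n M k a c) * INR (Xv n M j b c) * / (lam ^ (j + k) * Rv a))).
  rewrite rsum_scalr. unfold Rdiv. reflexivity.
  intros c Hc. unfold w. pose proof (Rpos c Hc). rewrite pow_add. field.
  repeat split; apply Rgt_not_eq; auto; apply Hl. Qed.

Lemma w_sum k a : (a < n)%nat -> rsum n (w k a) = 1.
Proof. intros Ha. unfold w. unfold Rdiv. rewrite rsum_scalr, E2 by auto.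
  pose proof (Rpos a Ha). assert (0 < lam ^ k) by (apply pow_lt; lra). field. split; lra. Qed.

Lemma w_nonneg k a c : (a < n)%nat -> (c < n)%nat -> 0 <= w k a c.
Proof. intros. unfold w. pose proof (Rpos a H). pose proof (Rpos c H0). assert (0 < lam ^ k) by (apply pow_lt; lra).
  apply Rmult_le_pos. apply Rmult_le_pos. apply pos_INR. lra. left; apply Rinv_0_lt_compat. apply Rmult_lt_0_compat; auto. Qed.

Definition Bnd j lo hi := forall a, (a < n)%nat -> lo <= f j a <= hi.

Lemma avg (wt g : nat -> R) lo hi : (forall c, (c < n)%nat -> 0 <= wt c) -> rsum n wt = 1 ->
  (forall c, (c < n)%nat -> lo <= g c <= hi) -> lo <= rsum n (fun c => wt c * g c) <= hi.
Proof. intros H1 H2 H3. split.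
  - replace lo with (rsum n wt * lo) by (rewrite H2; ring). rewrite <- rsum_scalr. apply rsum_le.
    intros c Hc. apply Rmult_le_compat_l; auto. apply H3; auto.
  - replace hi with (rsum n wt * hi) by (rewrite H2; ring). rewrite <- rsum_scalr. apply rsum_le.
    intros c Hc. apply Rmult_le_compat_l; auto. apply H3; auto. Qed.

Lemma B1 j k lo hi : Bnd j lo hi -> Bnd (j + k) lo hi.
Proof. intros H a Ha. rewrite E3 by auto. apply avg; auto. intros; apply w_nonneg; auto. apply w_sum; auto. Qed.

Lemma contr (wt g : nat -> R) kap lo hi : 0 < kap -> (forall c, (c < n)%nat -> kap <= wt c) -> rsum n wt = 1 ->
  (forall c, (c < n)%nat -> lo <= g c <= hi) ->
  (1 - INR n * kap) * lo + kap * rsum n g <= rsum n (fun c => wt c * g c) <= (1 - INR n * kap) * hi + kap * rsum n g.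
Proof. intros Hk H1 H2 H3.
  replace (rsum n (fun c => wt c * g c)) with (rsum n (fun c => (wt c - kap) * g c) + kap * rsum n g).
  2:{ rewrite <- rsum_scal, <- rsum_plus. apply rsum_ext; intros; ring. }
  assert (E : rsum n (fun c => wt c - kap) = 1 - INR n * kap) by (rewrite rsum_minus, rsum_const, H2; ring).
  split.
  - rewrite <- E, <- rsum_scalr. assert (rsum n (fun c => (wt c - kap) * lo) <= rsum n (fun c => (wt c - kap) * g c)).
    apply rsum_le. intros c Hc. apply Rmult_le_compat_l. specialize (H1 c Hc); lra. apply H3; auto. lra.
  - rewrite <- E, <- rsum_scalr. assert (rsum n (fun c => (wt c - kap) * g c) <= rsum n (fun c => (wt c - kap) * hi)).
    apply rsum_le. intros c Hc. apply Rmult_le_compat_l. specialize (H1 c Hc); lra. apply H3; auto. lra. Qed.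

Variable del : R.
Hypothesis Hdel : 0 < del.
Hypothesis Hdel2 : forall c, (c < n)%nat -> del <= Rv c.

Definition kap := del / lam ^ p.
Definition th := 1 - INR n * kap.

Lemma kap_pos : 0 < kap. Proof. unfold kap. apply Rdiv_lt_0_compat; auto. apply pow_lt; lra. Qed.

Lemma kap_le a c : (a < n)%nat -> (c < n)%nat -> kap <= w p a c.
Proof. intros Ha Hc. pose proof (Rpos a Ha). pose proof (Rle1 a Ha). pose proof (Hdel2 c Hc).
  assert (0 < lam ^ p) by (apply pow_lt; lra). specialize (Hpos a c Ha Hc). apply le_INR in Hpos. simpl in Hpos.
  assert (w p a c - kap = (INR (mpow n M p a c) * Rv c - del * Rv a) / (lam ^ p * Rv a)).
  { unfold w, kap. field. split; lra. }
  assert (0 <= (INR (mpow n M p a c) * Rv c - del * Rv a) / (lam ^ p * Rv a)).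
  { apply Rmult_le_pos; [|left; apply Rinv_0_lt_compat, Rmult_lt_0_compat; auto].
    assert (INR (mpow n M p a c) * Rv c >= 1 * Rv c). apply Rmult_ge_compat_r; lra.
    assert (del * Rv a <= del * 1) by (apply Rmult_le_compat_l; lra). lra. }
  lra. Qed.

Lemma th_range : 0 <= th < 1.
Proof. unfold th. pose proof kap_pos. assert (1 <= INR n) by (apply (le_INR 1); auto). split.
  - pose proof (w_sum p 0 ltac:(lia)). assert (rsum n (fun _ => kap) <= rsum n (w p 0)).
    apply rsum_le. intros; apply kap_le; lia. rewrite rsum_const in H2. lra.
  - nra. Qed.

Lemma Bnd0 : Bnd 0 0 (/ del).
Proof. intros a Ha. unfold f. simpl Xv. pose proof (Rpos a Ha). pose proof (Hdel2 a Ha). simpl pow.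
  destruct (Nat.eq_dec b a); simpl INR; split.
  - apply Rdiv_le_0_compat; lra.
  - rewrite Rmult_1_l. unfold Rdiv. rewrite Rmult_1_l. apply Rinv_le_contravar; auto.
  - unfold Rdiv; rewrite Rmult_0_l; lra.
  - unfold Rdiv; rewrite Rmult_0_l. left; apply Rinv_0_lt_compat; auto. Qed.

Lemma Bnd_all j : Bnd j 0 (/ del).
Proof. replace j with (0 + j)%nat by lia. apply B1, Bnd0. Qed.

Lemma Bndp : Bnd p (/ lam ^ p) (/ del).
Proof. intros a Ha. split; [|apply Bnd_all; auto].
  unfold f. assert (E: INR (Xv n M p b a) = INR (Xv n M (0 + p) b a)) by reflexivity. rewrite E, E1 by auto.
  rewrite (rsum_ext n _ (fun c => (if Nat.eq_dec b c then 1 else 0) * INR (mpow n M p a c))).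
  rewrite rsum_delta by auto.
  pose proof (Rpos a Ha). pose proof (Rle1 a Ha). assert (0 < lam ^ p) by (apply pow_lt; lra).
  specialize (Hpos a b Ha Hb). apply le_INR in Hpos. simpl in Hpos.
  assert (INR (mpow n M p a b) / (lam ^ p * Rv a) - / lam ^ p = (INR (mpow n M p a b) - Rv a) / (lam ^ p * Rv a)).
  { field; split; lra. }
  assert (0 <= (INR (mpow n M p a b) - Rv a) / (lam ^ p * Rv a)).
  { apply Rdiv_le_0_compat. lra. apply Rmult_lt_0_compat; auto. }
  lra.
  intros c Hc. simpl Xv. destruct (Nat.eq_dec b c); simpl; ring. Qed.

Lemma iter k : exists lo hi, Bnd (p + k * p) lo hi /\ / lam ^ p <= lo /\ hi - lo <= th ^ k / del.
Proof. induction k.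
  - exists (/ lam ^ p), (/ del). split. rewrite Nat.mul_0_l, Nat.add_0_r. apply Bndp.
    split. lra. simpl. assert (0 < / lam ^ p) by (apply Rinv_0_lt_compat, pow_lt; lra).
    unfold Rdiv; lra.
  - destruct IHk as (lo & hi & H1 & H2 & H3).
    set (j := (p + k * p)%nat). set (S0 := rsum n (f j)).
    exists ((1 - INR n * kap) * lo + kap * S0), ((1 - INR n * kap) * hi + kap * S0).
    assert (HS : INR n * lo <= S0).
    { unfold S0. rewrite <- rsum_const. apply rsum_le. intros; apply H1; auto. }
    pose proof kap_pos. pose proof th_range. unfold th in *.
    split.
    + intros a Ha. replace (p + S k * p)%nat with (j + p)%nat by (unfold j; simpl; lia).
      rewrite E3 by auto. apply contr; auto. intros; apply kap_le; auto. apply w_sum; auto.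
    + split. nra.
      simpl. replace (((1 - INR n * kap) * hi + kap * S0) - ((1 - INR n * kap) * lo + kap * S0))
        with ((1 - INR n * kap) * (hi - lo)) by ring.
      unfold Rdiv. rewrite Rmult_assoc. apply Rmult_le_compat_l. lra. exact H3. Qed.

Definition sigG (j : nat) : R := rsum n (fun a => INR (Xv n M j b a) * q a).
Fixpoint NcG (m : nat) : R := match m with O => 0 | S m' => NcG m' + sigG m' end.
Definition DR (m : nat) : R := rsum n (fun a => INR (Xv n M m b a)).
Definition Q : R := rsum n (fun a => q a * Rv a).

Lemma Q_nonneg : 0 <= Q. Proof. apply rsum_nonneg. intros. apply Rmult_le_pos; auto. left; apply Rpos; auto. Qed.

Lemma X_eq j a : (a < n)%nat -> INR (Xv n M j b a) = lam ^ j * Rv a * f j a.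
Proof. intros Ha. unfold f. pose proof (Rpos a Ha). assert (0 < lam ^ j) by (apply pow_lt; lra). field. split; lra. Qed.

Lemma sig_bound j lo hi : Bnd j lo hi -> sigG j <= lam ^ j * hi * Q.
Proof. intros H. unfold sigG, Q. rewrite <- rsum_scal. apply rsum_le. intros a Ha. rewrite X_eq by auto.
  pose proof (Rpos a Ha). pose proof (Hq a Ha). assert (0 < lam ^ j) by (apply pow_lt; lra).
  specialize (H a Ha). assert (0 <= lam ^ j * Rv a * q a) by (apply Rmult_le_pos; [apply Rmult_le_pos|]; lra).
  replace (lam ^ j * Rv a * f j a * q a) with ((lam ^ j * Rv a * q a) * f j a) by ring.
  replace (lam ^ j * hi * (q a * Rv a)) with ((lam ^ j * Rv a * q a) * hi) by ring.
  apply Rmult_le_compat_l; lra. Qed.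

Lemma DR_bound m lo hi : Bnd m lo hi -> lam ^ m * lo <= DR m.
Proof. intros H. unfold DR. destruct HPF as (_ & HR & _).
  replace (lam ^ m * lo) with (rsum n (fun a => lam ^ m * lo * Rv a)) by (rewrite rsum_scal, HR; ring).
  apply rsum_le. intros a Ha. rewrite X_eq by auto. pose proof (Rpos a Ha). assert (0 < lam ^ m) by (apply pow_lt; lra).
  specialize (H a Ha). replace (lam ^ m * Rv a * f m a) with ((lam ^ m * Rv a) * f m a) by ring.
  replace (lam ^ m * lo * Rv a) with ((lam ^ m * Rv a) * lo) by ring. apply Rmult_le_compat_l; nra. Qed.

Lemma DR_upper m lo hi : Bnd m lo hi -> DR m <= lam ^ m * hi.
Proof. intros H. unfold DR. destruct HPF as (_ & HR & _).
  replace (lam ^ m * hi) with (rsum n (fun a => lam ^ m * hi * Rv a)) by (rewrite rsum_scal, HR; ring).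
  apply rsum_le. intros a Ha. rewrite X_eq by auto. pose proof (Rpos a Ha). assert (0 < lam ^ m) by (apply pow_lt; lra).
  specialize (H a Ha). replace (lam ^ m * Rv a * f m a) with ((lam ^ m * Rv a) * f m a) by ring.
  replace (lam ^ m * hi * Rv a) with ((lam ^ m * Rv a) * hi) by ring. apply Rmult_le_compat_l; nra. Qed.

Hypothesis Hlam1 : 1 < lam.

Lemma accum j0 h : 0 <= h -> (forall j, (j0 <= j)%nat -> sigG j <= lam ^ j * h * Q) ->
  forall m, (j0 <= m)%nat -> NcG m <= NcG j0 + Q * h * lam ^ m / (lam - 1).
Proof. intros Hh H m Hm. induction Hm as [|m0 Hm IH].
  - assert (0 <= Q * h * lam ^ j0 / (lam - 1)).
    { apply Rdiv_le_0_compat; [|lra]. apply Rmult_le_pos; [apply Rmult_le_pos; auto; apply Q_nonneg|apply pow_le; lra]. }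
    lra.
  - simpl NcG. specialize (H m0 ltac:(lia)). simpl pow.
    assert (Q * h * (lam * lam ^ m0) / (lam - 1) = Q * h * lam ^ m0 / (lam - 1) + lam ^ m0 * h * Q) by (field; lra).
    lra. Qed.

Lemma ana_b eps K N lo hi : 0 < eps ->
  Bnd (p + K * p) lo hi -> / lam ^ p <= lo -> hi - lo <= th ^ K / del ->
  Q / (lam - 1) * (th ^ K / del) <= eps / (2 * lam ^ p) ->
  Q / (lam - 1) / del <= eps * lam ^ N / (2 * lam ^ p) ->
  NcG (p + K * p + N) <= (Q / (lam - 1) + eps) * DR (p + K * p + N) /\ lam ^ N <= DR (p + K * p + N).
Proof. intros He H1 H2 H3 HK HN. set (m1 := (p + K * p)%nat).
  set (m := (m1 + N)%nat).
  assert (Hl : forall i, 0 < lam ^ i) by (intros; apply pow_lt; lra).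
  assert (HQ := Q_nonneg).
  assert (HBm : Bnd m lo hi) by (apply B1; auto).
  assert (Hlo : 0 < lo) by (pose proof (Rinv_0_lt_compat _ (Hl p)); lra).
  assert (Hhi : 0 <= hi) by (specialize (H1 0%nat ltac:(lia)); lra).
  assert (A1 : NcG m1 <= NcG 0 + Q * (/ del) * lam ^ m1 / (lam - 1)).
  { apply accum. left; apply Rinv_0_lt_compat; auto. intros; apply (sig_bound j 0); apply Bnd_all. lia. }
  assert (A2 : NcG m <= NcG m1 + Q * hi * lam ^ m / (lam - 1)).
  { apply accum; auto. intros j Hj. apply (sig_bound j lo). replace j with (m1 + (j - m1))%nat by lia. apply B1; auto.
    unfold m; lia. }
  simpl NcG in A1.
  assert (D1 : lam ^ m * lo <= DR m) by (apply (DR_bound m lo hi); auto).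
  assert (Em : lam ^ m = lam ^ m1 * lam ^ N) by (unfold m; apply pow_add).
  assert (Em1 : lam ^ m1 = lam ^ p * lam ^ (K * p)) by (unfold m1; apply pow_add).
  assert (Hm1 : lam ^ p <= lam ^ m1).
  { rewrite Em1. assert (1 <= lam ^ (K * p)) by (apply pow_R1_Rle; lra). pose proof (Hl p). nra. }
  assert (D2 : lam ^ N <= DR m).
  { eapply Rle_trans; [|exact D1]. rewrite Em.
    assert (lam ^ m1 * lo >= 1). { assert (lam ^ p * / lam ^ p = 1) by (field; pose proof (Hl p); lra).
      assert (lam ^ m1 * lo >= lam ^ p * / lam ^ p). apply Rle_ge. assert (0 < / lam ^ p) by (apply Rinv_0_lt_compat; auto).
        apply Rmult_le_compat; [left; apply Hl| left; auto| exact Hm1| exact H2]. lra. }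
    pose proof (Hl N). nra. }
  split; auto.
  set (C := Q / (lam - 1)). assert (HC : 0 <= C) by (unfold C; apply Rdiv_le_0_compat; lra).
  assert (T1 : Q * / del * lam ^ m1 / (lam - 1) = (Q / (lam - 1) / del) * lam ^ m1) by (field; lra).
  assert (T2 : Q * hi * lam ^ m / (lam - 1) = C * hi * lam ^ m) by (unfold C; field; lra).
  assert (T3 : Q / (lam - 1) / del * lam ^ m1 <= eps * lam ^ m / (2 * lam ^ p)).
  { rewrite Em. replace (eps * (lam ^ m1 * lam ^ N) / (2 * lam ^ p)) with (eps * lam ^ N / (2 * lam ^ p) * lam ^ m1)
      by (field; pose proof (Hl p); lra). apply Rmult_le_compat_r; auto. left; auto. }
  assert (T4 : C * hi * lam ^ m <= C * lo * lam ^ m + eps * lam ^ m / (2 * lam ^ p)).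
  { assert (C * (hi - lo) <= eps / (2 * lam ^ p)).
    { eapply Rle_trans; [|exact HK]. apply Rmult_le_compat_l; auto. }
    assert (C * (hi - lo) * lam ^ m <= eps / (2 * lam ^ p) * lam ^ m) by (apply Rmult_le_compat_r; auto; left; auto).
    replace (eps * lam ^ m / (2 * lam ^ p)) with (eps / (2 * lam ^ p) * lam ^ m) by (field; pose proof (Hl p); lra).
    nra. }
  assert (T5 : eps * lam ^ m / lam ^ p <= eps * DR m).
  { assert (lam ^ m / lam ^ p <= lam ^ m * lo).
    { unfold Rdiv. apply Rmult_le_compat_l; auto. left; auto. }
    assert (eps * (lam ^ m / lam ^ p) <= eps * (lam ^ m * lo)) by (apply Rmult_le_compat_l; lra).
    assert (eps * (lam ^ m * lo) <= eps * DR m) by (apply Rmult_le_compat_l; lra).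
    unfold Rdiv in *. lra. }
  assert (T6 : C * lo * lam ^ m <= C * DR m).
  { replace (C * lo * lam ^ m) with (C * (lam ^ m * lo)) by ring. apply Rmult_le_compat_l; auto. }
  assert (T7 : eps * lam ^ m / (2 * lam ^ p) + eps * lam ^ m / (2 * lam ^ p) = eps * lam ^ m / lam ^ p)
    by (field; pose proof (Hl p); lra).
  fold C. lra. Qed.

End Ana.


Lemma ln_0 : ln 0 = 0. Proof. unfold ln. destruct (Rlt_dec 0 0) as [r|r]; [exfalso; exact (Rlt_irrefl 0 r)|reflexivity]. Qed.

Lemma lim_le u s al be l0 : Un_cv u s -> 0 <= al -> (forall l, (l0 <= l)%nat -> u l <= al / INR l + be) -> s <= be.
Proof. intros Hs Hal H. destruct (Rle_or_lt s be) as [|Hlt]; auto. exfalso.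
  set (e := (s - be) / 2). assert (He : 0 < e) by (unfold e; lra).
  destruct (Hs e He) as (N1 & HN1). destruct (INR_unbounded (al / e)) as (N2 & HN2).
  set (l := (N1 + l0 + N2 + 1)%nat).
  specialize (HN1 l ltac:(unfold l; lia)). specialize (H l ltac:(unfold l; lia)).
  unfold R_dist in HN1. apply Rabs_def2 in HN1.
  assert (HlN : INR N2 + 1 <= INR l) by (rewrite <- S_INR; apply le_INR; unfold l; lia).
  assert (Hl0 : 0 < INR l) by (pose proof (pos_INR N2); lra).
  assert (al / INR l < e).
  { apply (Rmult_lt_reg_r (INR l)); auto. unfold Rdiv. rewrite Rmult_assoc, Rinv_l by lra. rewrite Rmult_1_r.
    assert (al / e < INR l) by lra. apply (Rmult_lt_compat_r e) in H0; auto.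
    unfold Rdiv in H0. rewrite Rmult_assoc, Rinv_l in H0 by lra. lra. }
  unfold e in *. lra. Qed.

Lemma bound_exists (F : nat -> nat -> nat) n m : exists L, forall b j, (b < n)%nat -> (j <= m)%nat -> (F b j <= L)%nat.
Proof. exists (nsum n (fun b => nsum (S m) (F b))). intros b j Hb Hj.
  eapply Nat.le_trans; [|apply (nsum_term_le n (fun b => nsum (S m) (F b)) b Hb)].
  apply nsum_term_le. lia. Qed.

Lemma colsum n theta : is_random_subst n theta -> forall c, (c < n)%nat -> (1 <= nsum n (fun a => subst_matrix theta a c))%nat.
Proof. intros Hsub c Hc. destruct (Hsub c Hc) as (Hne & _ & Hw).
  destruct (theta c) as [|w ws] eqn:E; [congruence|].
  destruct (Hw w ltac:(simpl; auto)) as (Hw1 & Hw2).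
  unfold subst_matrix. rewrite E. simpl hd. rewrite (nsum_ext n _ (letter_count w)) by auto. rewrite <- (length_lc n w Hw2). destruct w; [congruence|simpl; lia]. Qed.

Lemma lam_ge1 n theta lam Rv : is_random_subst n theta -> PF_right_eigen n (subst_matrix theta) lam Rv -> 1 <= lam.
Proof. intros Hsub (HR & H1 & H2).
  assert (E : lam = rsum n (fun c => INR (nsum n (fun a => subst_matrix theta a c)) * Rv c)).
  { transitivity (rsum n (fun a => lam * Rv a)). rewrite rsum_scal, H1; ring.
    transitivity (rsum n (fun a => rsum n (fun c => INR (subst_matrix theta a c) * Rv c))).
    apply rsum_ext; intros; rewrite H2; auto. rewrite rsum_swap. apply rsum_ext. intros c Hc.
    rewrite INR_nsum, rsum_scalr. reflexivity. }
  rewrite E, <- H1. apply rsum_le. intros c Hc. pose proof (colsum n theta Hsub c Hc). apply le_INR in H.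
  simpl in H. pose proof (HR c Hc). nra. Qed.

Lemma NcG_Ncum n theta b m : NcG n (subst_matrix theta) (q1 theta) b m = Ncum n theta b m.
Proof. induction m; simpl; auto. rewrite IHm. reflexivity. Qed.

Lemma DR_Dn n theta b m : DR n (subst_matrix theta) b m = INR (Dn n theta b m).
Proof. unfold DR, Dn. rewrite INR_nsum. reflexivity. Qed.

Lemma ln_bound c0 L nn k Kx : 0 <= Kx -> INR c0 <= INR (S L) * INR (nn ^ k) * exp Kx -> (1 <= nn)%nat ->
  ln (INR c0) <= ln (INR (S L)) + INR k * ln (INR nn) + Kx.
Proof. intros HK H Hn.
  assert (H1 : 0 <= ln (INR (S L))). { rewrite <- ln_1. destruct (Rle_lt_or_eq_dec 1 (INR (S L))).
    apply (le_INR 1); lia. left; apply ln_increasing; lra. rewrite e; lra. }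
  assert (H2 : 0 <= ln (INR nn)). { rewrite <- ln_1. destruct (Rle_lt_or_eq_dec 1 (INR nn)).
    apply (le_INR 1); lia. left; apply ln_increasing; lra. rewrite e; lra. }
  assert (H3 : 0 <= INR k * ln (INR nn)) by (apply Rmult_le_pos; auto; apply pos_INR).
  destruct c0. change (INR 0) with 0. rewrite ln_0. lra.
  assert (Hc : 0 < INR (S c0)) by (apply lt_0_INR; lia).
  assert (Hp : 0 < INR (S L) * INR (nn ^ k) * exp Kx).
  { apply Rmult_lt_0_compat. apply Rmult_lt_0_compat. apply lt_0_INR; lia. apply lt_0_INR. apply Nat.neq_0_lt_0, Nat.pow_nonzero; lia. apply exp_pos. }
  assert (ln (INR (S c0)) <= ln (INR (S L) * INR (nn ^ k) * exp Kx)).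
  { destruct (Rle_lt_or_eq_dec _ _ H). left; apply ln_increasing; auto. rewrite e; lra. }
  assert (Hnn : 0 < INR nn) by (apply lt_0_INR; lia).
  assert (HSL : 0 < INR (S L)) by (apply lt_0_INR; lia).
  assert (Hpk : 0 < INR (nn ^ k)) by (rewrite pow_INR; apply pow_lt; auto).
  rewrite (ln_mult (INR (S L) * INR (nn ^ k)) (exp Kx)) in H0 by (try apply exp_pos; apply Rmult_lt_0_compat; auto).
  rewrite (ln_mult (INR (S L)) (INR (nn ^ k))) in H0 by auto.
  rewrite ln_exp, pow_INR, ln_pow in H0 by auto. lra. Qed.

Theorem mainTheorem7
  (n : nat) (theta : nat -> list (list nat))
  (Hn : (1 <= n)%nat)
  (Hsub : is_random_subst n theta)
  (Hsc : semi_compatible n theta)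
  (Hprim : primitive_matrix n (subst_matrix theta))
  (lam : R) (Rv : nat -> R)
  (HPF : PF_right_eigen n (subst_matrix theta) lam Rv)
  (c : nat -> nat)
  (Hc : forall l, has_card (fun w => length w = l /\ in_language n theta w) (c l))
  (s : R)
  (Hs : Un_cv (fun l => ln (INR (c l)) / INR l) s) :
  s <= / (lam - 1) * rsum n (fun a => ln (INR (length (theta a))) * Rv a).
Proof.
  destruct Hprim as (p & Hp & Hpos).
  destruct (min_pos n Rv (proj1 HPF)) as (del & Hdel & Hdel2).
  assert (Hlam : 1 <= lam) by (eapply lam_ge1; eauto).
  set (M := subst_matrix theta) in *.
  assert (HQ : 0 <= Q n Rv (q1 theta)).
  { apply rsum_nonneg. intros. apply Rmult_le_pos. apply q1_nonneg with n; auto. left; apply (proj1 HPF); auto. }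
  change (rsum n (fun a => ln (INR (length (theta a))) * Rv a)) with (Q n Rv (q1 theta)).
  destruct (Rle_lt_or_eq_dec 1 lam Hlam) as [Hlam1|Hlam1].
  2:{
    subst lam. replace (1 - 1) with 0 by ring. rewrite Rinv_0, Rmult_0_l.
    destruct (INR_unbounded (/ del)) as (L & HL).
    assert (HD : forall b j, (b < n)%nat -> (Dn n theta b j <= L)%nat).
    { intros b j Hb. pose proof (DR_upper n M 1 Rv HPF Hlam b j 0 (/ del) (Bnd_all n M 1 Rv Hn HPF Hlam p Hp b Hb del Hdel Hdel2 j)).
      unfold M in H. rewrite DR_Dn, pow1 in H. apply INR_le. lra. }
    apply (lim_le _ _ 0 0 (S L) Hs). lra. intros l Hl.
    rewrite (count_zero n theta Hsub Hsc L HD l (c l) ltac:(lia) (Hc l)). simpl. rewrite ln_0. unfold Rdiv. lra. }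
  set (C := Q n Rv (q1 theta) / (lam - 1)).
  assert (HC : 0 <= C) by (unfold C; apply Rdiv_le_0_compat; lra).
  replace (/ (lam - 1) * Q n Rv (q1 theta)) with C by (unfold C; unfold Rdiv; ring).
  assert (Hq : forall a, (a < n)%nat -> 0 <= q1 theta a) by (intros; apply q1_nonneg with n; auto).
  assert (Claim : forall eps (A0 : nat), 0 < eps -> (1 <= A0)%nat -> s <= ln (INR (S n)) / INR A0 + C + eps).
  { intros eps A0 He HA0.
    assert (Hl : forall i, 0 < lam ^ i) by (intros; apply pow_lt; lra).
    set (G := Q n Rv (q1 theta) / (lam - 1) / del).
    assert (HG : 0 <= G) by (unfold G; apply Rdiv_le_0_compat; auto).
    destruct (th_range n M lam Rv Hn HPF Hlam p Hp Hpos 0 ltac:(lia) del Hdel Hdel2) as [Ht0 Ht1].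
    set (y1 := eps / (2 * lam ^ p) / (G + 1)).
    assert (Hy1 : 0 < y1) by (unfold y1; apply Rdiv_lt_0_compat; [apply Rdiv_lt_0_compat; [lra|pose proof (Hl p); lra]|lra]).
    destruct (pow_lt_1_zero (th n lam p del) ltac:(rewrite Rabs_pos_eq; lra) y1 Hy1) as (K & HK).
    specialize (HK K (le_n K)). rewrite Rabs_pos_eq in HK by (apply pow_le; lra).
    assert (HK2 : Q n Rv (q1 theta) / (lam - 1) * (th n lam p del ^ K / del) <= eps / (2 * lam ^ p)).
    { replace (Q n Rv (q1 theta) / (lam - 1) * (th n lam p del ^ K / del)) with (G * th n lam p del ^ K) by (unfold G; field; lra).
      assert (G * th n lam p del ^ K <= (G + 1) * y1).
      { assert (0 <= th n lam p del ^ K) by (apply pow_le; lra). nra. }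
      unfold y1 in H. replace ((G + 1) * (eps / (2 * lam ^ p) / (G + 1))) with (eps / (2 * lam ^ p)) in H by (field; pose proof (Hl p); lra).
      lra. }
    destruct (Pow_x_infinity lam ltac:(rewrite Rabs_pos_eq; lra) (INR A0 + 2 * lam ^ p * G / eps)) as (N & HN).
    specialize (HN N (le_n N)). rewrite Rabs_pos_eq in HN by (apply pow_le; lra).
    assert (HN2 : Q n Rv (q1 theta) / (lam - 1) / del <= eps * lam ^ N / (2 * lam ^ p)).
    { fold G. assert (INR A0 >= 0) by (apply Rle_ge, pos_INR).
      assert (2 * lam ^ p * G / eps <= lam ^ N) by lra.
      apply (Rmult_le_reg_r (2 * lam ^ p)). pose proof (Hl p); lra.
      replace (eps * lam ^ N / (2 * lam ^ p) * (2 * lam ^ p)) with (eps * lam ^ N) by (field; pose proof (Hl p); lra).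
      apply (Rmult_le_compat_l eps) in H0; [|lra]. replace (eps * (2 * lam ^ p * G / eps)) with (G * (2 * lam ^ p)) in H0 by (field; lra).
      lra. }
    set (m := (p + K * p + N)%nat).
    assert (Hb : forall b, (b < n)%nat -> Ncum n theta b m <= (C + eps) * INR (Dn n theta b m) /\ lam ^ N <= INR (Dn n theta b m)).
    { intros b Hb. destruct (iter n M lam Rv Hn HPF Hlam p Hp Hpos b Hb del Hdel Hdel2 K) as (lo & hi & B1 & B2 & B3).
      pose proof (ana_b n M lam Rv (q1 theta) Hn HPF Hlam Hq p Hp b Hb del Hdel Hdel2 Hlam1 eps K N lo hi He B1 B2 B3 HK2 HN2) as HH.
      unfold M in HH. rewrite NcG_Ncum, DR_Dn in HH. exact HH. }
    destruct (bound_exists (fun b j => Dn n theta b j) n m) as (L & HL).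
    assert (HKc : 0 <= C + eps) by lra.
    assert (HAm : forall b, (b < n)%nat -> (A0 <= Dn n theta b m)%nat).
    { intros b Hb'. apply INR_le. destruct (Hb b Hb'). assert (0 <= 2 * lam ^ p * G / eps).
      apply Rdiv_le_0_compat; [|lra]. pose proof (Hl p); nra. lra. }
    pose proof (count_main n theta Hsub Hsc m A0 L (C + eps) HA0 HL HAm HKc (fun b Hb' => proj1 (Hb b Hb'))) as CM.
    apply (lim_le _ _ (ln (INR (S L)) + 2 * INR L * (ln (INR (S n)) / INR A0 + (C + eps))) _ (S L) Hs).
    - assert (0 <= ln (INR (S L))). { rewrite <- ln_1. destruct (Rle_lt_or_eq_dec 1 (INR (S L))).
        apply (le_INR 1); lia. left; apply ln_increasing; lra. rewrite e; lra. }
      assert (0 <= ln (INR (S n))). { rewrite <- ln_1. destruct (Rle_lt_or_eq_dec 1 (INR (S n))).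
        apply (le_INR 1); lia. left; apply ln_increasing; lra. rewrite e; lra. }
      assert (0 < INR A0) by (apply lt_0_INR; lia).
      assert (0 <= ln (INR (S n)) / INR A0) by (apply Rdiv_le_0_compat; lra).
      pose proof (pos_INR L). nra.
    - intros l Hl'. specialize (CM l (c l) ltac:(lia) (Hc l)).
      apply ln_bound in CM; [|apply Rmult_le_pos; [lra|apply pos_INR]|lia].
      set (k := ((l + 2 * L) / A0)%nat) in *.
      assert (Hk : INR A0 * INR k <= INR (l + 2 * L)) by (rewrite <- mult_INR; apply le_INR; apply Nat.mul_div_le; lia).
      assert (HA : 0 < INR A0) by (apply lt_0_INR; lia).
      assert (Hl0 : 0 < INR l) by (apply lt_0_INR; lia).
      assert (Hln : 0 <= ln (INR (S n))). { rewrite <- ln_1. destruct (Rle_lt_or_eq_dec 1 (INR (S n))).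
        apply (le_INR 1); lia. left; apply ln_increasing; lra. rewrite e; lra. }
      assert (Hk2 : INR k * ln (INR (S n)) <= INR (l + 2 * L) * (ln (INR (S n)) / INR A0)).
      { assert (INR k <= INR (l + 2 * L) / INR A0).
        { apply (Rmult_le_reg_l (INR A0)); auto. replace (INR A0 * (INR (l + 2 * L) / INR A0)) with (INR (l + 2 * L)) by (field; lra). lra. }
        replace (INR (l + 2 * L) * (ln (INR (S n)) / INR A0)) with (INR (l + 2 * L) / INR A0 * ln (INR (S n))) by (field; lra).
        apply Rmult_le_compat_r; auto. }
      rewrite plus_INR, mult_INR in *. simpl (INR 2) in *.
      apply (Rmult_le_reg_r (INR l)); auto. unfold Rdiv at 1. rewrite Rmult_assoc, Rinv_l, Rmult_1_r by lra.
      rewrite Rmult_plus_distr_r. unfold Rdiv at 1. rewrite Rmult_assoc, Rinv_l, Rmult_1_r by lra.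
      nra. }
  destruct (Rle_or_lt s C) as [|Hlt]; auto. exfalso.
  set (d := s - C). assert (Hd : 0 < d) by (unfold d; lra).
  assert (Hln : 0 <= ln (INR (S n))). { rewrite <- ln_1. destruct (Rle_lt_or_eq_dec 1 (INR (S n))).
    apply (le_INR 1); lia. left; apply ln_increasing; lra. rewrite e; lra. }
  destruct (INR_unbounded (4 * ln (INR (S n)) / d)) as (A1 & HA1).
  specialize (Claim (d / 4) (S A1) ltac:(lra) ltac:(lia)).
  assert (ln (INR (S n)) / INR (S A1) < d / 4).
  { assert (ES : INR (S A1) = INR A1 + 1) by apply S_INR.
    assert (0 < INR (S A1)) by (pose proof (pos_INR A1); lra).
    apply (Rmult_lt_reg_r (INR (S A1))); auto. replace (ln (INR (S n)) / INR (S A1) * INR (S A1)) with (ln (INR (S n))) by (field; lra).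
    assert (4 * ln (INR (S n)) / d * d < INR A1 * d) by (apply Rmult_lt_compat_r; lra).
    replace (4 * ln (INR (S n)) / d * d) with (4 * ln (INR (S n))) in H0 by (field; lra). rewrite ES. nra. }
  unfold d in *. lra.
Qed.
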